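(* Let $A, B_1, \ldots, B_m \in \mathbb{C}^{d\times d}$. Define the $d^2\times d^2$ matrices \[ D_{A,B}=\overline{A}\otimes A+\sum_{k=1}^m \overline{B}_k\otimes B_k,\qquad C_{A,B}=\overline{A}\otimes I+I\otimes A+\sum_{k=1}^m \overline{B}_k\otimes B_k, \] and the $d\times d$ Hermitian matrices \[ N_{A,B}=A^*A+\sum_{k=1}^m B_k^*B_k,\qquad M_{A,B}=A+A^*+\sum_{k=1}^m B_k^*B_k. \] Then \[ \varrho(N_{A,B})\le \rho(D_{A,B})\le \alpha(N_{A,B}),\qquad \varrho(M_{A,B})\le \alpha(C_{A,B})\le \alpha(M_{A,B}). \]
   Context: For a matrix $X$, $\overline{X}$ is the entrywise complex conjugate, $X^*$ the conjugate transpose, $I$ the identity matrix, and $\otimes$ the Kronecker product ($X\otimes Y$ is the block matrix with blocks $X_{ij}Y$). For a square matrix $X$: $\rho(X)=\max\{|\lambda|:\lambda \text{ eigenvalue of } X\}$ (spectral radius), $\alpha(X)=\max\{\operatorname{Re}\lambda:\lambda \text{ eigenvalue of } X\}$ (spectral abscissa), and $\varrho(X)=\min\{\operatorname{Re}\lambda:\lambda \text{ eigenvalue of } X\}$. For a Hermitian matrix, $\varrho$ and $\alpha$ are its smallest and largest eigenvalues. *)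

(* Defs.v *)
From HB Require Import structures.
From mathcomp Require Import all_boot all_order all_algebra.
From mathcomp Require Import classical_sets reals.
From mathcomp.real_closed Require Import complex mxtens.
Set Implicit Arguments. Unset Strict Implicit. Unset Printing Implicit Defensive.
Import Order.TTheory GRing.Theory Num.Theory.
Local Open Scope ring_scope.
Local Open Scope classical_set_scope.

(* The spectral quantities are the sup/inf of the (finite) sets
   {|z|} resp. {Re z} over eigenvalues z; for d >= 1 these are max/min. *)

Definition mxconj (R : realType) m n (X : 'M[R[i]]_(m, n)) : 'M[R[i]]_(m, n) :=
  map_mx (@conjc R) X.

Definition mxadj (R : realType) m n (X : 'M[R[i]]_(m, n)) : 'M[R[i]]_(n, m) :=
  (mxconj X)^T.

Definition spec_rad (R : realType) n (X : 'M[R[i]]_n) : R :=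
  sup [set r : R | exists z : R[i], eigenvalue X z /\ r = ComplexField.Normc.normc z].

Definition spec_abs (R : realType) n (X : 'M[R[i]]_n) : R :=
  sup [set r : R | exists z : R[i], eigenvalue X z /\ r = complex.Re z].

Definition spec_min (R : realType) n (X : 'M[R[i]]_n) : R :=
  inf [set r : R | exists z : R[i], eigenvalue X z /\ r = complex.Re z].

Definition D_AB (R : realType) d m (A : 'M[R[i]]_d) (B : 'I_m -> 'M[R[i]]_d)
  : 'M[R[i]]_(d * d) :=
  mxconj A *t A + \sum_(k < m) (mxconj (B k) *t B k).

Definition C_AB (R : realType) d m (A : 'M[R[i]]_d) (B : 'I_m -> 'M[R[i]]_d)
  : 'M[R[i]]_(d * d) :=
  mxconj A *t (1%:M : 'M[R[i]]_d) + (1%:M : 'M[R[i]]_d) *t A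
  + \sum_(k < m) (mxconj (B k) *t B k).

Definition N_AB (R : realType) d m (A : 'M[R[i]]_d) (B : 'I_m -> 'M[R[i]]_d)
  : 'M[R[i]]_d :=
  mxadj A *m A + \sum_(k < m) (mxadj (B k) *m B k).

Definition M_AB (R : realType) d m (A : 'M[R[i]]_d) (B : 'I_m -> 'M[R[i]]_d)
  : 'M[R[i]]_d :=
  A + mxadj A + \sum_(k < m) (mxadj (B k) *m B k).

(* Main.v *)
Require Import Defs.
From HB Require Import structures.
From mathcomp Require Import all_boot all_order all_algebra.
From mathcomp Require Import classical_sets reals.
From mathcomp.real_closed Require Import complex mxtens.
From mathcomp Require Import spectral sesquilinear mxred ring lra.
Set Implicit Arguments. Unset Strict Implicit. Unset Printing Implicit Defensive.
Import Order.TTheory GRing.Theory Num.Theory.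
Local Open Scope ring_scope.

Section P1.
Variable R : realType.
Local Notation C := (R[i]).

Lemma sum_tens d (F : 'I_(d * d) -> C) :
  \sum_k F k = \sum_(i < d) \sum_(j < d) F (mxtens_index (i, j)).
Proof.
rewrite (reindex (@mxtens_index d d)) /=; last first.
  by exists (@mxtens_unindex d d) => x _; [rewrite mxtens_indexK|rewrite mxtens_unindexK].
by rewrite pair_big /=; apply: eq_bigr => -[i j].
Qed.

Definition mat d (v : 'rV[C]_(d * d)) : 'M[C]_d :=
  \matrix_(i, j) v 0 (mxtens_index (i, j)).
Definition vecr d (V : 'M[C]_d) : 'rV[C]_(d * d) :=
  \row_k V (mxtens_unindex k).1 (mxtens_unindex k).2.

Lemma matK d (V : 'M[C]_d) : mat (vecr V) = V.
Proof. by apply/matrixP => i j; rewrite !mxE mxtens_indexK. Qed.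

Lemma vecrK d (v : 'rV[C]_(d * d)) : vecr (mat v) = v.
Proof.
apply/rowP => k; rewrite !mxE; case: (mxtens_indexP k) => i j.
by rewrite mxtens_indexK.
Qed.

Lemma matD d (v w : 'rV[C]_(d * d)) : mat (v + w) = mat v + mat w.
Proof. by apply/matrixP => i j; rewrite !mxE. Qed.
Lemma matZ d a (v : 'rV[C]_(d * d)) : mat (a *: v) = a *: mat v.
Proof. by apply/matrixP => i j; rewrite !mxE. Qed.
Lemma mat0 d : mat (0 : 'rV[C]_(d * d)) = 0.
Proof. by apply/matrixP => i j; rewrite !mxE. Qed.
Lemma mat_sum d I (r : seq I) (P : pred I) (F : I -> 'rV[C]_(d * d)) :
  mat (\sum_(i <- r | P i) F i) = \sum_(i <- r | P i) mat (F i).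
Proof.
elim/big_rec2: _ => [|i x y _ <-]; first by rewrite mat0.
by rewrite matD.
Qed.
Lemma mat_eq0 d (v : 'rV[C]_(d * d)) : (mat v == 0) = (v == 0).
Proof.
apply/idP/idP => /eqP H; apply/eqP; last by rewrite H mat0.
by rewrite -(vecrK v) H; apply/rowP => k; rewrite !mxE.
Qed.

Lemma mat_tens d (v : 'rV[C]_(d * d)) (X Y : 'M[C]_d) :
  mat (v *m (mxconj X *t Y)) = mxadj X *m mat v *m Y.
Proof.
apply/matrixP => j1 j2; rewrite !mxE sum_tens.
under eq_bigr do under eq_bigr do rewrite tensmxE.
rewrite exchange_big /=; apply: eq_bigr => i2 _; rewrite !mxE big_distrl /=.
by apply: eq_bigr => i1 _; rewrite !mxE; ring.
Qed.

End P1.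

Section P2.
Variable R : realType.
Local Notation C := (R[i]).

Lemma mxadjE m n (X : 'M[C]_(m, n)) : mxadj X = map_mx Num.Def.conjC (X^T).
Proof. by rewrite /mxadj /mxconj map_trmx. Qed.

Lemma mxadjK m n (X : 'M[C]_(m, n)) : mxadj (mxadj X) = X.
Proof. by apply/matrixP => i j; rewrite !mxE conjcK. Qed.

Lemma mxadjM m n p (X : 'M[C]_(m, n)) (Y : 'M[C]_(n, p)) :
  mxadj (X *m Y) = mxadj Y *m mxadj X.
Proof.
apply/matrixP => i j; rewrite !mxE rmorph_sum; apply: eq_bigr => k _.
by rewrite !mxE rmorphM mulrC.
Qed.

Lemma mxadjD m n (X Y : 'M[C]_(m, n)) : mxadj (X + Y) = mxadj X + mxadj Y.
Proof. by apply/matrixP => i j; rewrite !mxE rmorphD. Qed.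
Lemma mxadjN m n (X : 'M[C]_(m, n)) : mxadj (- X) = - mxadj X.
Proof. by apply/matrixP => i j; rewrite !mxE rmorphN. Qed.
Lemma mxadjB m n (X Y : 'M[C]_(m, n)) : mxadj (X - Y) = mxadj X - mxadj Y.
Proof. by rewrite mxadjD mxadjN. Qed.
Lemma mxadjZ m n a (X : 'M[C]_(m, n)) : mxadj (a *: X) = a^* *: mxadj X.
Proof. by apply/matrixP => i j; rewrite !mxE rmorphM. Qed.
Lemma mxadj0 m n : mxadj (0 : 'M[C]_(m, n)) = 0.
Proof. by apply/matrixP => i j; rewrite !mxE rmorph0. Qed.
Lemma mxadj_scalar n a : mxadj (a%:M : 'M[C]_n) = (a^*)%:M.
Proof.
by apply/matrixP => i j; rewrite !mxE eq_sym rmorphMn.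
Qed.
Lemma mxadj1 n : mxadj (1%:M : 'M[C]_n) = 1%:M.
Proof. by rewrite mxadj_scalar rmorph1. Qed.
Lemma mxadj_sum m n I (r : seq I) (P : pred I) (F : I -> 'M[C]_(m, n)) :
  mxadj (\sum_(i <- r | P i) F i) = \sum_(i <- r | P i) mxadj (F i).
Proof.
elim/big_rec2: _ => [|i x y _ <-]; first by rewrite mxadj0.
by rewrite mxadjD.
Qed.
Lemma mxadj00 (X : 'M[C]_1) : mxadj X 0 0 = (X 0 0)^*.
Proof. by rewrite !mxE. Qed.

Definition qf n (H : 'M[C]_n) (u : 'cV[C]_n) := (mxadj u *m H *m u) 0 0.
Definition nrm2 n (u : 'cV[C]_n) := (mxadj u *m u) 0 0.

Lemma nrm2E n (u : 'cV[C]_n) : nrm2 u = \sum_i (u i 0)^* * u i 0.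
Proof. by rewrite /nrm2 mxE; apply: eq_bigr => i _; rewrite !mxE. Qed.

Lemma nrm2_ge0 n (u : 'cV[C]_n) : 0 <= nrm2 u.
Proof. by rewrite nrm2E sumr_ge0 // => i _; rewrite mulrC mul_conjC_ge0. Qed.

Lemma nrm2_eq0 n (u : 'cV[C]_n) : nrm2 u = 0 -> u = 0.
Proof.
rewrite nrm2E => /eqP; rewrite psumr_eq0; last first.
  by move=> i _; rewrite mulrC mul_conjC_ge0.
move=> /allP H; apply/matrixP => i j; rewrite ord1 mxE.
by apply/eqP; rewrite -mul_conjC_eq0 mulrC; apply/eqP/eqP/H; rewrite mem_index_enum.
Qed.

Lemma nrm2_gt0 n (u : 'cV[C]_n) : u != 0 -> 0 < nrm2 u.
Proof.
move=> /eqP u0; rewrite lt_def nrm2_ge0 andbT; apply/eqP => /nrm2_eq0.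
exact: u0.
Qed.

Lemma conj_nrm2 n (u : 'cV[C]_n) : (nrm2 u)^* = nrm2 u.
Proof. by apply/CrealP; rewrite ger0_real // nrm2_ge0. Qed.

Lemma conj_qf n (H : 'M[C]_n) u : mxadj H = H -> (qf H u)^* = qf H u.
Proof. by move=> hH; rewrite /qf -mxadj00 !mxadjM mxadjK hH mulmxA. Qed.

Lemma qf_real n (H : 'M[C]_n) u : mxadj H = H -> qf H u \is Num.real.
Proof. by move=> hH; apply/CrealP; rewrite conj_qf. Qed.

Lemma qfZ n (H : 'M[C]_n) u a : qf H (a *: u) = (a^* * a) * qf H u.
Proof. by rewrite /qf mxadjZ -!scalemxAl -scalemxAr !mxE; ring. Qed.

Lemma nrm2Z n (u : 'cV[C]_n) a : nrm2 (a *: u) = (a^* * a) * nrm2 u.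
Proof. by rewrite /nrm2 mxadjZ -scalemxAl -scalemxAr !mxE; ring. Qed.

Lemma qfD n (H1 H2 : 'M[C]_n) u : qf (H1 + H2) u = qf H1 u + qf H2 u.
Proof. by rewrite /qf mulmxDr mulmxDl mxE. Qed.
Lemma qf_scale n (H : 'M[C]_n) a u : qf (a *: H) u = a * qf H u.
Proof. by rewrite /qf -scalemxAr -scalemxAl mxE. Qed.
Lemma qf_sum n I (r : seq I) (P : pred I) (F : I -> 'M[C]_n) u :
  qf (\sum_(i <- r | P i) F i) u = \sum_(i <- r | P i) qf (F i) u.
Proof.
elim/big_rec2: _ => [|i x y _ <-]; first by rewrite /qf mulmx0 mul0mx mxE.
by rewrite qfD.
Qed.
Lemma qf1 n (u : 'cV[C]_n) : qf 1%:M u = nrm2 u.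
Proof. by rewrite /qf mulmx1. Qed.
Lemma qf_conj n (H K : 'M[C]_n) u : qf (mxadj K *m H *m K) u = qf H (K *m u).
Proof. by rewrite /qf mxadjM !mulmxA. Qed.

Lemma herm_spec n (H : 'M[C]_n) : (0 < n)%N -> mxadj H = H ->
  exists lmin lmax : R,
   [/\ forall u, lmin%:C%C * nrm2 u <= qf H u,
       forall u, qf H u <= lmax%:C%C * nrm2 u,
       exists2 u : 'cV[C]_n, u != 0 & H *m u = lmax%:C%C *: u &
       exists2 u : 'cV[C]_n, u != 0 & H *m u = lmin%:C%C *: u].
Proof.
move=> n0 hH.
have Hn : H \is normalmx by apply/normalmxP; rewrite -!mxadjE hH.
have /orthomx_spectralP := Hn.
set P := spectralmx H; set sp := spectral_diag H => HP.
have Pu : P \is unitarymx := spectral_unitarymx H.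
have iP : invmx P = mxadj P by rewrite invmx_unitary // mxadjE.
have PP : P *m mxadj P = 1%:M by rewrite mxadjE; apply/unitarymxP.
have PP' : mxadj P *m P = 1%:M.
  by rewrite -iP mulVmx // unitarymx_unit.
rewrite iP in HP.
pose u i : 'cV[C]_n := mxadj P *m delta_mx i 0.
have Hu i : H *m u i = sp 0 i *: u i.
  rewrite /u HP -!mulmxA [P *m (_ *m _)]mulmxA PP mul1mx.
  rewrite mul_diag_mx.
  apply/matrixP => a b; rewrite !mxE big_distrr /=; apply: eq_bigr => k _.
  rewrite !mxE; case: (eqVneq k i) => [->|ki]; first by ring.
  by rewrite !mulr0.
have u0 i : u i != 0.
  apply/eqP => /(congr1 (mulmx P)); rewrite /u mulmxA PP mul1mx mulmx0.
  by move/matrixP/(_ i 0); rewrite !mxE !eqxx /= => /eqP; rewrite oner_eq0.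
have spr i : sp 0 i \is Num.real.
  apply/CrealP.
  have := conj_qf (u i) hH; rewrite /qf -mulmxA Hu -scalemxAr mxE.
  rewrite rmorphM /= -/(nrm2 _) conj_nrm2 => /eqP.
  rewrite -subr_eq0 -mulrBl mulf_eq0 subr_eq0 => /orP[/eqP //|].
  by move=> /eqP/nrm2_eq0 /eqP; rewrite (negbTE (u0 i)).
pose s i := complex.Re (sp 0 i).
have sE i : sp 0 i = (s i)%:C%C by rewrite RRe_real.
pose i0 : 'I_n := Ordinal n0.
pose imax := [arg max_(i > i0) s i]%O.
pose imin := [arg min_(i < i0) s i]%O.
have smax i : s i <= s imax by rewrite /imax; case: arg_maxP => // j _ Hj; apply: Hj.
have smin i : s imin <= s i by rewrite /imin; case: arg_minP => // j _ Hj; apply: Hj.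
have qfE v : qf H v = \sum_i (s i)%:C%C * (((P *m v) i 0)^* * (P *m v) i 0).
  rewrite HP qf_conj /qf mul_mx_diag mxE; apply: eq_bigr => i _.
  by rewrite !mxE sE; ring.
have nE v : nrm2 v = \sum_i (((P *m v) i 0)^* * (P *m v) i 0).
  by rewrite -nrm2E /nrm2 mxadjM -mulmxA (mulmxA (mxadj P)) PP' mul1mx.
have ge0 v i : 0 <= ((P *m v) i 0)^* * (P *m v) i 0 by rewrite mulrC mul_conjC_ge0.
exists (s imin), (s imax); split.
- move=> v; rewrite qfE nE mulr_sumr; apply: ler_sum => i _.
  by apply: ler_wpM2r => //; rewrite lecR.
- move=> v; rewrite qfE nE mulr_sumr; apply: ler_sum => i _.
  by apply: ler_wpM2r => //; rewrite lecR.
- by exists (u imax) => //; rewrite Hu sE.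
- by exists (u imin) => //; rewrite Hu sE.
Qed.

End P2.

Section P3.
Variable R : realType.
Local Notation C := (R[i]).

Definition psi p d (K : 'I_p -> 'M[C]_d) (V : 'M[C]_d) :=
  \sum_k mxadj (K k) *m V *m K k.
Definition DK p d (K : 'I_p -> 'M[C]_d) : 'M[C]_(d * d) :=
  \sum_k (mxconj (K k) *t K k).
Definition NK p d (K : 'I_p -> 'M[C]_d) : 'M[C]_d :=
  \sum_k mxadj (K k) *m K k.

Lemma mat_DK p d (K : 'I_p -> 'M[C]_d) v : mat (v *m DK K) = psi K (mat v).
Proof.
rewrite /DK mulmx_sumr mat_sum /psi; apply: eq_bigr => k _.
by rewrite mat_tens.
Qed.

Lemma bil_conj n (X : 'M[C]_n) (a b : 'cV[C]_n) :
  ((mxadj a *m X *m b) 0 0)^* = (mxadj b *m mxadj X *m a) 0 0.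
Proof. by rewrite -mxadj00 !mxadjM mxadjK mulmxA. Qed.

Lemma bil_conj1 n (a b : 'cV[C]_n) :
  ((mxadj a *m b) 0 0)^* = (mxadj b *m a) 0 0.
Proof. by rewrite -mxadj00 !mxadjM mxadjK. Qed.

Lemma cs2 n (a b : 'cV[C]_n) :
  (mxadj a *m b) 0 0 + (mxadj b *m a) 0 0 <= nrm2 a + nrm2 b.
Proof.
have E : nrm2 (a - b) = nrm2 a + nrm2 b -
    ((mxadj a *m b) 0 0 + (mxadj b *m a) 0 0).
  by rewrite /nrm2 mxadjB mulmxBl !mulmxBr !mxE; ring.
by rewrite -subr_ge0 -E nrm2_ge0.
Qed.

Lemma qf_adj n (K : 'M[C]_n) a : qf (mxadj K *m K) a = nrm2 (K *m a).
Proof.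
have -> : mxadj K *m K = mxadj K *m 1%:M *m K by rewrite mulmx1.
by rewrite qf_conj qf1.
Qed.

Lemma qf_NK p n (K : 'I_p -> 'M[C]_n) a :
  qf (NK K) a = \sum_k nrm2 (K k *m a).
Proof. by rewrite /NK qf_sum; apply: eq_bigr => k _; rewrite qf_adj. Qed.

Lemma bil_psi p n (K : 'I_p -> 'M[C]_n) V (a b : 'cV[C]_n) :
  (mxadj a *m psi K V *m b) 0 0 =
  \sum_k (mxadj (K k *m a) *m (V *m (K k *m b))) 0 0.
Proof.
rewrite /psi mulmx_sumr mulmx_suml summxE; apply: eq_bigr => k _.
by rewrite mxadjM !mulmxA.
Qed.

Lemma sum_cs2 p n (P Q : 'I_p -> 'cV[C]_n) :
  let w := \sum_k (mxadj (P k) *m Q k) 0 0 in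
  w + w^* <= \sum_k nrm2 (P k) + \sum_k nrm2 (Q k).
Proof.
rewrite /= rmorph_sum -big_split -big_split /=; apply: ler_sum => k _.
by rewrite bil_conj1 cs2.
Qed.

Lemma gram_spec n (V : 'M[C]_n) : V != 0 ->
  exists mu : R, exists2 x : 'cV[C]_n, x != 0 &
   [/\ 0 < mu, mxadj V *m (V *m x) = mu%:C%C *: x &
       forall u, nrm2 (V *m u) <= mu%:C%C * nrm2 u].
Proof.
move=> V0.
have n0 : (0 < n)%N.
  by case: n V V0 => // V; rewrite thinmx0 eqxx.
have hH : mxadj (mxadj V *m V) = mxadj V *m V by rewrite mxadjM mxadjK.
have [_ [mu [_ Hle [x x0 Hx] _]]] := herm_spec n0 hH.
exists mu, x => //; split; last 2 first.
- by rewrite mulmxA.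
- by move=> u; rewrite -qf_adj.
have nx := nrm2_gt0 x0.
have : nrm2 (V *m x) = mu%:C%C * nrm2 x.
  by rewrite -qf_adj /qf -mulmxA Hx -scalemxAr mxE.
case: (ltrgtP mu 0) => // [mu_lt0|mu0].
  move=> H; have := nrm2_ge0 (V *m x); rewrite H pmulr_lge0 // => h.
  by move: mu_lt0; rewrite ltNge -lecR h.
have V0' : forall u : 'cV[C]_n, V *m u = 0.
  move=> u; apply: nrm2_eq0; apply/eqP; rewrite eq_le nrm2_ge0 andbT.
  by have := Hle u; rewrite -qf_adj mu0 mul0r.
case/eqP: V0; apply/matrixP => i j.
have := congr1 (fun M : 'cV[C]_n => M i 0) (V0' (delta_mx j 0)).
rewrite !mxE => <-; rewrite (bigD1 j) //= !mxE !eqxx mulr1 big1 ?addr0 //.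
by move=> k /negbTE kj; rewrite !mxE kj mulr0.
Qed.

Lemma conjR (r : R) : (r%:C%C : C)^* = r%:C%C.
Proof. exact: conjc_real. Qed.

Lemma ub_rad p n (K : 'I_p -> 'M[C]_n) (lam : R) z (V : 'M[C]_n) :
  (forall u, qf (NK K) u <= lam%:C%C * nrm2 u) -> V != 0 ->
  psi K V = z *: V -> `|z| <= lam%:C%C.
Proof.
move=> HN V0 HV.
have [mu [x x0 [mu0 Hx Hmu]]] := gram_spec V0.
set y := V *m x.
have ny : nrm2 y = mu%:C%C * nrm2 x by rewrite /nrm2 mxadjM -mulmxA Hx -scalemxAr mxE.
have nx := nrm2_gt0 x0.
pose c : C := if z == 0 then 1 else z / `|z|.
have cz : c^* * z = `|z|.
  rewrite /c; case: eqP => [->|/eqP z0]; first by rewrite normr0 mulr0.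
  rewrite rmorphM rmorphV ?unitfE ?normr_eq0 //= conj_normC mulrAC -normCKC.
  by rewrite expr2 mulfK // normr_eq0.
have cc : c^* * c = 1.
  rewrite /c; case: eqP => [_|/eqP z0]; first by rewrite rmorph1 mulr1.
  rewrite rmorphM rmorphV ?unitfE ?normr_eq0 //= conj_normC.
  rewrite mulrACA -invfM -normCKC -expr2 mulfV //.
  by rewrite expf_neq0 // normr_eq0.
have key := sum_cs2 (fun k => K k *m (c *: y)) (fun k => V *m (K k *m x)).
rewrite /= -bil_psi HV in key.
have E : (mxadj (c *: y) *m (z *: V) *m x) 0 0 = `|z| * (mu%:C%C * nrm2 x).
  rewrite mxadjZ -!scalemxAl -!scalemxAr -!scalemxAl -cz -ny.
  rewrite /nrm2 /y mulmxA !mxE; ring.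
rewrite E in key.
have e1 : \sum_k nrm2 (K k *m (c *: y)) <= lam%:C%C * (mu%:C%C * nrm2 x).
  by rewrite -qf_NK (le_trans (HN _)) // nrm2Z cc mul1r ny.
have e2 : \sum_k nrm2 (V *m (K k *m x)) <= mu%:C%C * (lam%:C%C * nrm2 x).
  rewrite (le_trans (ler_sum _ (fun k _ => Hmu (K k *m x)))) //.
  by rewrite -mulr_sumr -qf_NK ler_wpM2l // ?lecR ?ltW // HN.
have := le_trans key (lerD e1 e2).
rewrite rmorphM /= conj_normC rmorphM /= conjR conj_nrm2.
have -> : `|z| * (mu%:C%C * nrm2 x) + `|z| * (mu%:C%C * nrm2 x) =
  `|z| * (2 * (mu%:C%C * nrm2 x)) by ring.
have -> : lam%:C%C * (mu%:C%C * nrm2 x) + mu%:C%C * (lam%:C%C * nrm2 x) =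
  lam%:C%C * (2 * (mu%:C%C * nrm2 x)) by ring.
rewrite ler_pM2r //; apply: mulr_gt0; first by rewrite ltr0n.
by apply: mulr_gt0 => //; rewrite ltcR.
Qed.

Lemma ent00D (X Y : 'M[C]_1) : (X + Y) 0 0 = X 0 0 + Y 0 0.
Proof. by rewrite mxE. Qed.

Lemma ub_abs p n (A : 'M[C]_n) (B : 'I_p -> 'M[C]_n) (lam : R) z V :
  (forall u, qf (A + mxadj A + NK B) u <= lam%:C%C * nrm2 u) -> V != 0 ->
  mxadj A *m V + V *m A + psi B V = z *: V -> z + z^* <= 2 * lam%:C%C.
Proof.
move=> HM V0 HV.
have [mu [x x0 [mu0 Hx Hmu]]] := gram_spec V0.
set y := V *m x.
have ny : nrm2 y = mu%:C%C * nrm2 x by rewrite /nrm2 mxadjM -mulmxA Hx -scalemxAr mxE.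
have nx := nrm2_gt0 x0.
have key := sum_cs2 (fun k => B k *m y) (fun k => V *m (B k *m x)).
rewrite /= -bil_psi in key.
set w := (mxadj y *m psi B V *m x) 0 0 in key.
have E : z * (mu%:C%C * nrm2 x) = qf (mxadj A) y + mu%:C%C * qf A x + w.
  have := congr1 (fun M => (mxadj y *m M *m x) 0 0) HV => /=.
  rewrite !mulmxDr !mulmxDl !ent00D -/w => HH.
  transitivity ((mxadj y *m (z *: V) *m x) 0 0).
    by rewrite -scalemxAr -scalemxAl mxE -ny /nrm2 /y mulmxA.
  rewrite -HH; congr (_ + _ + _).
    by rewrite /qf -!mulmxA.
  rewrite mulmxA.
  have -> : mxadj y *m V = mxadj (mu%:C%C *: x) by rewrite -Hx mxadjM mxadjK.
  by rewrite mxadjZ conjR -!scalemxAl mxE.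
have Ec := congr1 Num.conj E.
rewrite rmorphM rmorphM /= conjR conj_nrm2 rmorphD rmorphD rmorphM /= conjR in Ec.
rewrite {1}/qf bil_conj mxadjK -/(qf A y) in Ec.
rewrite /qf bil_conj -/(qf (mxadj A) x) in Ec.
have S : (z + z^*) * (mu%:C%C * nrm2 x) =
   qf (A + mxadj A) y + mu%:C%C * qf (A + mxadj A) x + (w + w^*).
  by rewrite mulrDl E Ec !qfD /qf; ring.
have e2 : \sum_k nrm2 (V *m (B k *m x)) <= mu%:C%C * qf (NK B) x.
  rewrite (le_trans (ler_sum _ (fun k _ => Hmu (B k *m x)))) //.
  by rewrite -mulr_sumr -qf_NK.
have T : (z + z^*) * (mu%:C%C * nrm2 x) <=
  qf (A + mxadj A + NK B) y + mu%:C%C * qf (A + mxadj A + NK B) x.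
  rewrite S [qf (_ + NK B) y]qfD [qf (_ + NK B) x]qfD mulrDr.
  set a := qf (A + mxadj A) y; set b := mu%:C%C * qf (A + mxadj A) x.
  set c := qf (NK B) y; set e := mu%:C%C * qf (NK B) x.
  have -> : a + c + (b + e) = a + b + (c + e) by ring.
  rewrite lerD2l; apply: le_trans key _.
  by rewrite /c qf_NK lerD2l.
have m0 : 0 <= mu%:C%C :> C by rewrite lecR ltW.
have := le_trans T (lerD (HM y) (ler_wpM2l m0 (HM x))).
rewrite ny => h.
move: h.
have -> : lam%:C%C * (mu%:C%C * nrm2 x) + mu%:C%C * (lam%:C%C * nrm2 x) =
  2 * lam%:C%C * (mu%:C%C * nrm2 x) by ring.
 rewrite ler_pM2r //.
by apply: mulr_gt0 => //; rewrite ltcR.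
Qed.

End P3.

Section P4.
Variable R : realType.
Local Notation C := (R[i]).

Lemma bernoulli (h : R) k : 0 <= h -> 1 + k%:R * h <= (1 + h) ^+ k.
Proof.
move=> h0; elim: k => [|k IH]; first by rewrite mul0r addr0 expr0.
rewrite exprS.
have h1 : 0 <= 1 + h by lra.
apply: le_trans (ler_wpM2l h1 IH).
rewrite -natr1; have : 0 <= k%:R :> R by []. nra.
Qed.

Lemma pow_cmp (c s K : R) : 0 <= c -> 0 <= s ->
  (forall k, c ^+ k <= K * s ^+ k) -> c <= s.
Proof.
move=> c0 s0 H; rewrite leNgt; apply/negP => sc.
have [s_eq0|s_gt0] := eqVneq s 0.
  by have := H 1%N; rewrite s_eq0 expr1 mulr0 => h; lra.
have {s_gt0} s_gt0 : 0 < s by rewrite lt_def s_gt0.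
pose h := c / s - 1.
have h0 : 0 < h by rewrite /h subr_gt0 ltr_pdivlMr // mul1r.
have K0 : 0 <= K by have := H 0%N; rewrite !expr0 mulr1 => ?; lra.
pose k := Num.Def.archi_bound (K / h).
have hk : K / h < k%:R by apply: archi_boundP; rewrite divr_ge0 // ltW.
have := H k.
have -> : c = (1 + h) * s by rewrite /h addrC subrK mulfVK // gt_eqF.
rewrite exprMn ler_pM2r ?exprn_gt0 // => hk2.
have := le_trans (bernoulli k (ltW h0)) hk2.
move: hk; rewrite ltr_pdivrMr //; lra.
Qed.

Lemma pow_bound n (Y : 'M[C]_n) (s : C) (z : 'rV[C]_n) : 0 <= s ->
  (forall i, \sum_j `|Y i j| <= s) -> forall k,
  \sum_j `|(iter k (fun w => w *m Y) z) 0 j| <= s ^+ k * \sum_j `|z 0 j|.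
Proof.
move=> s0 HY; elim => [|k IH]; first by rewrite expr0 mul1r.
rewrite iterS; set w := iter k _ z.
apply: (@le_trans _ _ (\sum_j \sum_i `|w 0 i| * `|Y i j|)).
  apply: ler_sum => j _; rewrite mxE; apply: le_trans (ler_norm_sum _ _ _) _.
  by apply: ler_sum => i _; rewrite normrM.
rewrite exchange_big /=.
apply: (@le_trans _ _ (\sum_i `|w 0 i| * s)).
  apply: ler_sum => i _; rewrite -mulr_sumr; apply: ler_wpM2l => //.
by rewrite -mulr_suml exprS mulrC -mulrA; apply: ler_wpM2l => //; rewrite mulrC.
Qed.

Definition psd n (Y : 'M[C]_n) := forall u : 'cV[C]_n, 0 <= qf Y u.

Lemma vecrD d (X Y : 'M[C]_d) : vecr (X + Y) = vecr X + vecr Y.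
Proof. by apply/rowP => k; rewrite !mxE. Qed.
Lemma vecrZ d a (X : 'M[C]_d) : vecr (a *: X) = a *: vecr X.
Proof. by apply/rowP => k; rewrite !mxE. Qed.

Lemma LB d (G Q : 'M[C]_(d * d)) (c s : R) :
  (0 < d)%N -> 0 <= c -> 0 <= s -> Q \in unitmx ->
  (forall Y : 'M[C]_d, psd Y -> psd (mat (vecr Y *m G))) ->
  psd (mat (vecr 1%:M *m G) - c%:C%C *: 1%:M) ->
  (forall i, \sum_j `|(Q *m G *m invmx Q) i j| <= s%:C%C) ->
  c <= s.
Proof.
move=> d0 c0 s0 Qu Gpos GI HT.
pose w k := iter k (fun w => w *m G) (vecr (1%:M : 'M[C]_d)).
have Wk k : psd (mat (w k) - (c%:C%C ^+ k) *: 1%:M).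
  elim: k => [|k IH]; first by rewrite /w /= matK expr0 scale1r subrr => u; rewrite /qf mulmx0 mul0mx mxE.
  have -> : w k.+1 = vecr (mat (w k) - c%:C%C ^+ k *: 1%:M) *m G +
      c%:C%C ^+ k *: (vecr 1%:M *m G).
    by rewrite scalemxAl -mulmxDl -vecrZ -vecrD subrK vecrK /w iterS.
  move=> u; rewrite matD matZ exprS.
  have -> : mat (vecr (mat (w k) - c%:C%C ^+ k *: 1%:M) *m G) +
      c%:C%C ^+ k *: mat (vecr 1%:M *m G) - c%:C%C * c%:C%C ^+ k *: 1%:M =
      mat (vecr (mat (w k) - c%:C%C ^+ k *: 1%:M) *m G) +
      c%:C%C ^+ k *: (mat (vecr 1%:M *m G) - c%:C%C *: 1%:M).
    by rewrite scalerBr scalerA [c%:C%C ^+ k * _]mulrC addrA.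
  rewrite qfD qf_scale; apply: addr_ge0; first exact: Gpos.
  by apply: mulr_ge0; [apply: exprn_ge0; rewrite lecR|apply: GI].
pose i0 : 'I_d := Ordinal d0.
pose j0 := mxtens_index (i0, i0).
have lower k : (c ^+ k)%:C%C <= `|w k 0 j0|.
  have := Wk k (delta_mx i0 0).
  have -> : forall Y : 'M[C]_d, qf Y (delta_mx i0 0) = Y i0 i0.
    move=> Y; rewrite /qf !mxE (bigD1 i0) //= big1 => [|j /negbTE ji].
      rewrite !mxE (bigD1 i0) //= big1 => [|j /negbTE ji]; last by rewrite !mxE ji conjc0 mul0r.
      by rewrite !mxE !eqxx conjc1 mul1r mulr1 !addr0.
    by rewrite !mxE ji mulr0.
  rewrite !mxE eqxx mulr1 subr_ge0 rmorphXn /= => h.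
  have hr : w k 0 j0 \is Num.real.
    by apply: ger0_real; apply: le_trans (h); rewrite exprn_ge0 // lecR.
  exact: le_trans h (real_ler_norm hr).
pose T := Q *m G *m invmx Q.
pose z k := w k *m invmx Q.
have zS k : z k = iter k (fun v => v *m T) (z 0%N).
  elim: k => // k IH; rewrite iterS -IH /z /T /w iterS.
  by rewrite !mulmxA mulmxKV.
pose Qt := \sum_i \sum_j `|Q i j|.
pose Z0 := \sum_j `|z 0%N 0 j|.
have upper k : `|w k 0 j0| <= (Qt * Z0) * (s%:C%C) ^+ k.
  have -> : w k = z k *m Q by rewrite /z mulmxKV.
  rewrite mxE; apply: le_trans (ler_norm_sum _ _ _) _.
  apply: (@le_trans _ _ (\sum_i `|z k 0 i| * Qt)).
    apply: ler_sum => i _; rewrite normrM; apply: ler_wpM2l => //.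
    apply: (@le_trans _ _ (\sum_j `|Q i j|)).
      by rewrite (bigD1 j0) //= -[X in X <= _]addr0 lerD2l sumr_ge0.
    rewrite /Qt [X in _ <= X](bigD1 i) //= -subr_ge0 addrAC subrr add0r.
    by apply: sumr_ge0 => *; apply: sumr_ge0.
  rewrite -mulr_suml zS mulrC -mulrA; apply: ler_wpM2l.
    by apply: sumr_ge0 => i _; apply: sumr_ge0.
  rewrite mulrC; apply: pow_bound => //; first by rewrite lecR.
apply: (@pow_cmp _ _ (complex.Re (Qt * Z0))) => // k.
have := le_trans (lower k) (upper k).
have QZr : Qt * Z0 = (complex.Re (Qt * Z0))%:C%C.
  rewrite RRe_real // ger0_real // mulr_ge0 //.
    by apply: sumr_ge0 => i _; apply: sumr_ge0.
  by apply: sumr_ge0.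
rewrite QZr -rmorphXn -rmorphM /= lecR //.
Qed.

End P4.

Section P5.
Variable R : realType.
Local Notation C := (R[i]).

Lemma invmx_right n (A B : 'M[C]_n) : A *m B = 1%:M -> invmx A = B.
Proof.
move=> AB; have [Au _] := mulmx1_unit AB.
by rewrite -[invmx A]mulmx1 -AB mulmxA mulVmx // mul1mx.
Qed.

Lemma eig_conj n (Q X : 'M[C]_n) a : Q \in unitmx ->
  eigenvalue (Q *m X *m invmx Q) a -> eigenvalue X a.
Proof.
move=> Qu /eigenvalueP [v Hv v0]; apply/eigenvalueP; exists (v *m Q).
  by rewrite scalemxAl -Hv !mulmxA mulmxKV.
apply: contra v0 => /eqP h; apply/eqP.
by rewrite -[v]mulmx1 -(mulmxV Qu) mulmxA h mul0mx.
Qed.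

Lemma eig_trig n (T : 'M[C]_n) i : is_trig_mx T -> eigenvalue T (T i i).
Proof.
move=> Tt; rewrite eigenvalue_root_char char_poly_trig //.
by rewrite (bigD1 i) //= rootM root_XsubC eqxx.
Qed.

Lemma normR (r : R) : 0 <= r -> `|(r%:C%C : C)| = r%:C%C.
Proof. by move=> r0; rewrite ger0_norm // lecR. Qed.

Lemma scaled_schur n (X : 'M[C]_n) (eps : R) : (0 < n)%N -> 0 < eps ->
  exists2 Q : 'M[C]_n, Q \in unitmx &
   (forall i, eigenvalue X ((Q *m X *m invmx Q) i i)) /\
   (forall i, \sum_(j | j != i) `|(Q *m X *m invmx Q) i j| <= eps%:C%C).
Proof.
move=> n0 e0.
have [P Pu Ptr] := Schur X n0.
have Pun : P \in unitmx := unitarymx_unit Pu.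
rewrite /similar_to /= conjumx // in Ptr.
set T0 := P *m X *m invmx P in Ptr.
pose W := \sum_i \sum_j `|T0 i j|.
have W0 : 0 <= W by apply: sumr_ge0 => i _; apply: sumr_ge0.
have Wr : W = (complex.Re W)%:C%C by rewrite RRe_real // ger0_real.
pose w := complex.Re W.
have w0 : 0 <= w by rewrite -lecR -Wr.
pose del := Num.min 1 (eps / (w + 1)).
have del0 : 0 < del by rewrite lt_min ltr01 divr_gt0 //; lra.
have del1 : del <= 1 by rewrite ge_min lexx.
have delw : del * w <= eps.
  have hq : eps / (w + 1) * (w + 1) = eps.
    by rewrite mulfVK //; apply/eqP => h; lra.
  have h1 : del <= eps / (w + 1) by rewrite ge_min lexx orbT.
  have q0 : 0 <= eps / (w + 1) by apply: divr_ge0; lra.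
  move: hq h1 q0; set q := eps / (w + 1) => hq h1 q0; nra.
pose D : 'M[C]_n := diag_mx (\row_i ((del ^+ i)%:C%C)).
pose D' : 'M[C]_n := diag_mx (\row_i ((del^-1 ^+ i)%:C%C)).
have DD' : D *m D' = 1%:M.
  rewrite mulmx_diag; apply/matrixP => i j; rewrite !mxE.
  case: eqP => [->|]; last by rewrite !mulr0n.
  by rewrite -rmorphM /= exprVn mulfV ?expf_neq0 ?gt_eqF.
pose Q := D *m P.
have QQ : Q *m (invmx P *m D') = 1%:M.
  by rewrite /Q mulmxA -(mulmxA D) mulmxV // mulmx1.
have Qu : Q \in unitmx by have [] := mulmx1_unit QQ.
exists Q => //.
have TE : Q *m X *m invmx Q = D *m T0 *m D'.
  by rewrite (invmx_right QQ) /Q /T0 !mulmxA.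
have Tij i j : (Q *m X *m invmx Q) i j =
    ((del ^+ i * del^-1 ^+ j)%:C%C) * T0 i j.
  rewrite TE mul_mx_diag !mxE (bigD1 i) //= big1 => [|k /negbTE ki].
    by rewrite !mxE eqxx mulr1n addr0 rmorphM /=; ring.
  by rewrite !mxE eq_sym ki mulr0n mul0r.
split.
  move=> i; rewrite Tij exprVn mulfV ?expf_neq0 ?gt_eqF // mul1r.
  apply: (eig_conj Pun); exact: eig_trig.
move=> i.
have bound j : j != i -> `|(Q *m X *m invmx Q) i j| <= del%:C%C * `|T0 i j|.
  move=> ji; rewrite Tij normrM normR; last first.
    by apply: mulr_ge0; apply: exprn_ge0; rewrite ?invr_ge0 ltW.
  case: (ltnP i j) => [ij|ji']; first by move/is_trig_mxP: Ptr => ->; rewrite // normr0 !mulr0.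
  apply: ler_wpM2r => //; rewrite lecR.
  have ji2 : (j < i)%N by rewrite ltn_neqAle ji'; move: ji; rewrite -val_eqE => ->.
  rewrite -(subnK (ltnW ji2)) exprD mulrAC exprVn mulfVK ?expf_neq0 ?gt_eqF //.
  have : (0 < i - j)%N by rewrite subn_gt0.
  case: (i - j)%N => // k _; rewrite exprS; apply: le_trans (ler_wpM2l (ltW del0) _) _.
    by apply: exprn_ile1; [exact: ltW|].
  by rewrite mulr1.
apply: (@le_trans _ _ (\sum_(j | j != i) del%:C%C * `|T0 i j|)); first exact: ler_sum.
rewrite -mulr_sumr; apply: le_trans (_ : del%:C%C * W <= _).
  apply: ler_wpM2l; first by rewrite lecR ltW.
  apply: (@le_trans _ _ (\sum_j `|T0 i j|)).
    by rewrite [X in _ <= X](bigD1 i) //= -subr_ge0 addrK.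
  rewrite /W [X in _ <= X](bigD1 i) //= -subr_ge0 addrAC subrr add0r.
  by apply: sumr_ge0 => *; apply: sumr_ge0.
by rewrite Wr -rmorphM /= lecR.
Qed.

End P5.

Section P6.
Variable R : realType.
Local Notation C := (R[i]).

Lemma normc_cast (z : C) : `|z| = (ComplexField.Normc.normc z)%:C%C.
Proof. by case: z => a b; rewrite normc_def. Qed.

Lemma my_normc_ge0 (z : C) : 0 <= ComplexField.Normc.normc z.
Proof. by case: z => a b; apply: sqrtr_ge0. Qed.

Lemma myRe_conj (z : C) : complex.Re (z^*) = complex.Re z.
Proof. by case: z. Qed.

Lemma myRe_real (r : R) : complex.Re (r%:C%C : C) = r.
Proof. by []. Qed.

Lemma lecRe (x y : C) : x <= y -> complex.Re x <= complex.Re y.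
Proof. by rewrite lecE => /andP[]. Qed.

Definition Kab d m (A : 'M[C]_d) (B : 'I_m -> 'M[C]_d) (k : 'I_m.+1) :=
  if unlift ord0 k is Some j then B j else A.

Lemma D_ABE d m (A : 'M[C]_d) (B : 'I_m -> 'M[C]_d) : D_AB A B = DK (Kab A B).
Proof.
rewrite /DK big_ord_recl /Kab unlift_none; congr (_ + _).
by apply: eq_bigr => j _; rewrite liftK.
Qed.

Lemma N_ABE d m (A : 'M[C]_d) (B : 'I_m -> 'M[C]_d) : N_AB A B = NK (Kab A B).
Proof.
rewrite /NK big_ord_recl /Kab unlift_none; congr (_ + _).
by apply: eq_bigr => j _; rewrite liftK.
Qed.

Lemma NK_herm p d (K : 'I_p -> 'M[C]_d) : mxadj (NK K) = NK K.
Proof. by rewrite /NK mxadj_sum; apply: eq_bigr => k _; rewrite mxadjM mxadjK. Qed.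

Lemma M_herm d m (A : 'M[C]_d) (B : 'I_m -> 'M[C]_d) :
  mxadj (M_AB A B) = M_AB A B.
Proof.
rewrite /M_AB -/(NK B) !mxadjD NK_herm mxadjK; congr (_ + _); exact: addrC.
Qed.

Lemma mxconj1 d : mxconj (1%:M : 'M[C]_d) = 1%:M.
Proof. by apply/matrixP => i j; rewrite !mxE conjc_nat. Qed.

Lemma mat_C d m (A : 'M[C]_d) (B : 'I_m -> 'M[C]_d) v :
  mat (v *m C_AB A B) = mxadj A *m mat v + mat v *m A + psi B (mat v).
Proof.
have h : (1%:M : 'M[C]_d) *t A = mxconj 1%:M *t A by rewrite mxconj1.
rewrite /C_AB !mulmxDr !matD mat_tens h mat_tens mxadj1 mul1mx mulmx1.
by rewrite -/(DK B) mat_DK.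
Qed.

Lemma eig_mat d (X : 'M[C]_(d * d)) z : eigenvalue X z ->
  exists2 V : 'M[C]_d, V != 0 & mat (vecr V *m X) = z *: V.
Proof.
move=> /eigenvalueP [v Hv v0]; exists (mat v); first by rewrite mat_eq0.
by rewrite vecrK Hv matZ.
Qed.

Lemma herm_sup n (H : 'M[C]_n) (lmin lmax : R) : mxadj H = H ->
  (forall u, lmin%:C%C * nrm2 u <= qf H u) ->
  (forall u, qf H u <= lmax%:C%C * nrm2 u) ->
  (exists2 u : 'cV[C]_n, u != 0 & H *m u = lmax%:C%C *: u) ->
  (exists2 u : 'cV[C]_n, u != 0 & H *m u = lmin%:C%C *: u) ->
  spec_abs H = lmax /\ spec_min H = lmin.
Proof.
move=> hH Hlo Hup [u1 u10 Hu1] [u2 u20 Hu2].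
have bnd z : eigenvalue H z -> lmin <= complex.Re z <= lmax.
  move=> /eigenvalueP [v Hv v0].
  have u0 : mxadj v != 0 by apply: contra v0 => /eqP h; rewrite -(mxadjK v) h mxadj0.
  have Hu : H *m mxadj v = z^* *: mxadj v by rewrite -hH -mxadjM Hv mxadjZ.
  have q : qf H (mxadj v) = z^* * nrm2 (mxadj v).
    by rewrite /qf -mulmxA Hu -scalemxAr mxE.
  have np := nrm2_gt0 u0.
  have := Hlo (mxadj v); have := Hup (mxadj v); rewrite q !ler_pM2r // => h1 h2.
  by rewrite -myRe_conj -(myRe_real lmin) -(myRe_real lmax) !lecRe.
have mem (l : R) (u : 'cV[C]_n) : u != 0 -> H *m u = l%:C%C *: u ->
    eigenvalue H l%:C%C.
  move=> u0 Hu; apply/eigenvalueP; exists (mxadj u).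
    by rewrite -{1}hH -mxadjM Hu mxadjZ conjR.
  by apply: contra u0 => /eqP h; rewrite -(mxadjK u) h mxadj0.
split.
- rewrite /spec_abs; apply/eqP; rewrite eq_le; apply/andP; split.
    apply: ge_sup; first by exists lmax, lmax%:C%C; split; [exact: mem Hu1|].
    by move=> r [z [Hz ->]]; case/andP: (bnd z Hz).
  apply: ub_le_sup; last by exists lmax%:C%C; split; [exact: mem Hu1|].
  by exists lmax => r [z [Hz ->]]; case/andP: (bnd z Hz).
- rewrite /spec_min; apply/eqP; rewrite eq_le; apply/andP; split; last first.
    apply: lb_le_inf; first by exists lmin, lmin%:C%C; split; [exact: mem Hu2|].
    by move=> r [z [Hz ->]]; case/andP: (bnd z Hz).
  apply: ge_inf; last by exists lmin%:C%C; split; [exact: mem Hu2|].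
  by exists lmin => r [z [Hz ->]]; case/andP: (bnd z Hz).
Qed.

End P6.

Section P7.
Variable R : realType.
Local Notation C := (R[i]).

Lemma qf_sub n (H : 'M[C]_n) (c : C) u : qf (H - c *: 1%:M) u = qf H u - c * nrm2 u.
Proof. by rewrite qfD -scaleNr qf_scale qf1 mulNr. Qed.

Lemma psd_psi p d (K : 'I_p -> 'M[C]_d) Y : psd Y -> psd (psi K Y).
Proof.
move=> HY u; rewrite /psi qf_sum; apply: sumr_ge0 => k _.
by rewrite qf_conj.
Qed.

Lemma rad_bounds d p (K : 'I_p -> 'M[C]_d) (lmin lmax : R) : (0 < d)%N ->
  (forall u, lmin%:C%C * nrm2 u <= qf (NK K) u) ->
  (forall u, qf (NK K) u <= lmax%:C%C * nrm2 u) ->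
  lmin <= spec_rad (DK K) <= lmax.
Proof.
move=> d0 Hlo Hup.
have dd0 : (0 < d * d)%N by rewrite muln_gt0 d0.
set S := [set r : R | exists z : C, eigenvalue (DK K) z /\ r = ComplexField.Normc.normc z]%classic.
have [z0 Hz0] := eigenvalue_closed (DK K) dd0.
have S0 : S (ComplexField.Normc.normc z0) by exists z0.
have ub r : S r -> r <= lmax.
  move=> [z [Hz ->]]; have [V V0 HV] := eig_mat Hz.
  rewrite mat_DK matK in HV.
  by have := ub_rad Hup V0 HV; rewrite normc_cast lecR.
have hub : has_ubound S by exists lmax.
have rho0 : 0 <= spec_rad (DK K).
  apply: le_trans (my_normc_ge0 z0) _; exact: ub_le_sup S0.
apply/andP; split; last by apply: ge_sup; [exists (ComplexField.Normc.normc z0)|].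
have [l0|l0] := lerP lmin 0; first exact: le_trans l0 rho0.
apply/ler_addgt0Pr => eps e0.
have [Q Qu [Heig Hoff]] := scaled_schur (DK K) dd0 e0.
apply: (@LB _ d (DK K) Q lmin (spec_rad (DK K) + eps) d0 (ltW l0) _ Qu); first by apply: addr_ge0 => //; exact: ltW.
- by move=> Y HY; rewrite mat_DK matK; apply: psd_psi.
- move=> u; rewrite mat_DK matK qf_sub subr_ge0.
  have -> : psi K 1%:M = NK K by apply: eq_bigr => k _; rewrite mulmx1.
  exact: Hlo.
- move=> i; rewrite (bigD1 i) //= rmorphD; apply: lerD; last exact: Hoff.
  rewrite normc_cast lecR; apply: (ub_le_sup hub).
  by exists ((Q *m DK K *m invmx Q) i i); split; [exact: Heig|].
Qed.

Lemma norm1p (w : C) : `|1 + w| <= (1 + complex.Re w)%:C%C + `|w| ^+ 2.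
Proof.
rewrite !normc_cast -rmorphXn -rmorphD lecR.
case: w => x y /=.
rewrite sqr_sqrtr; last by nra.
set t := x ^+ 2 + y ^+ 2.
have t0 : 0 <= t by rewrite /t; nra.
have h : 0 <= 1 + x + t by rewrite /t; nra.
rewrite -(ger0_norm h) -sqrtr_sqr ler_sqrt; last by nra.
rewrite /t; nra.
Qed.

Lemma myRe_add (x y : C) : complex.Re (x + y) = complex.Re x + complex.Re y.
Proof. by case: x; case: y. Qed.

Lemma realC_Re (x : C) : 0 <= x -> x = (complex.Re x)%:C%C.
Proof. by move=> x0; rewrite RRe_real // ger0_real. Qed.

Definition Gt d m (A : 'M[C]_d) (B : 'I_m -> 'M[C]_d) (a : R) : 'M[C]_(d * d) :=
  1%:M + a%:C%C *: C_AB A B + (a * a)%:C%C *: (mxconj A *t A).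

Lemma mat_Gt d m (A : 'M[C]_d) (B : 'I_m -> 'M[C]_d) a v :
  mat (v *m Gt A B a) = mat v + a%:C%C *: (mxadj A *m mat v + mat v *m A + psi B (mat v))
    + (a * a)%:C%C *: (mxadj A *m mat v *m A).
Proof.
by rewrite /Gt !mulmxDr mulmx1 !matD -!scalemxAr !matZ mat_C mat_tens.
Qed.

Lemma qf_Gt d m (A : 'M[C]_d) (B : 'I_m -> 'M[C]_d) a (Y : 'M[C]_d) u :
  qf (Y + a%:C%C *: (mxadj A *m Y + Y *m A + psi B Y)
    + (a * a)%:C%C *: (mxadj A *m Y *m A)) u =
  qf Y ((1%:M + a%:C%C *: A) *m u) + a%:C%C * qf (psi B Y) u.
Proof.
rewrite -qf_conj mxadjD mxadj1 mxadjZ conjR.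
rewrite !mulmxDl !mulmxDr !mul1mx !mulmx1 -?scalemxAl -?scalemxAr ?mulmxA.
rewrite !qfD !qf_scale !qfD rmorphM /=; ring.
Qed.

Lemma choose_a (l eps tt ft : R) : 0 < eps -> 0 <= tt -> 0 <= ft ->
  exists a : R, [/\ 0 < a, a * (tt ^+ 2 + ft + 1) <= eps & 0 <= 1 + a * l].
Proof.
move=> e0 t0 f0.
have nl := normr_ge0 l.
pose a := Num.min (eps / (tt ^+ 2 + ft + 1)) (1 / (`|l| + 1)).
have a0 : 0 < a by rewrite lt_min !divr_gt0 //; nra.
exists a; split => //.
  have h1 : a <= eps / (tt ^+ 2 + ft + 1) by rewrite ge_min lexx.
  by rewrite -ler_pdivlMr //; nra.
have h1 : a <= 1 / (`|l| + 1) by rewrite ge_min lexx orbT.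
have a2 : a * (`|l| + 1) <= 1 by rewrite -ler_pdivlMr //; nra.
case: (lerP 0 l) => h; [rewrite ger0_norm // in a2|rewrite ltr0_norm // in a2]; nra.
Qed.

Lemma row_real (a al eps tt ft : R) : 0 < a -> 0 <= tt -> 0 <= ft ->
  a * (tt ^+ 2 + ft + 1) <= eps ->
  1 + a * al + a * a * tt ^+ 2 + a * eps + a * a * ft <= 1 + a * (al + 2 * eps).
Proof. move=> a0 t0 f0 h; nra. Qed.

Lemma abs_bounds d m (A : 'M[C]_d) (B : 'I_m -> 'M[C]_d) (lmin lmax : R) :
  (0 < d)%N ->
  (forall u, lmin%:C%C * nrm2 u <= qf (M_AB A B) u) ->
  (forall u, qf (M_AB A B) u <= lmax%:C%C * nrm2 u) ->
  lmin <= spec_abs (C_AB A B) <= lmax.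
Proof.
move=> d0 Hlo Hup.
have dd0 : (0 < d * d)%N by rewrite muln_gt0 d0.
have ME : M_AB A B = A + mxadj A + NK B by [].
set S := [set r : R | exists z : C, eigenvalue (C_AB A B) z /\ r = complex.Re z]%classic.
have [z0 Hz0] := eigenvalue_closed (C_AB A B) dd0.
have S0 : S (complex.Re z0) by exists z0.
have ub r : S r -> r <= lmax.
  move=> [z [Hz ->]]; have [V V0 HV] := eig_mat Hz.
  rewrite mat_C matK in HV.
  have := ub_abs (lam := lmax) _ V0 HV; rewrite -ME => /(_ Hup).
  move/lecRe; rewrite myRe_add myRe_conj.
  have -> : 2 * lmax%:C%C = (2 * lmax)%:C%C :> C by rewrite rmorphM rmorph_nat.
  rewrite myRe_real; lra.
have hub : has_ubound S by exists lmax.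
apply/andP; split; last by apply: ge_sup; [exists (complex.Re z0)|].
set al := spec_abs (C_AB A B).
have alE : al = sup S by [].
apply/ler_addgt0Pr => e e0.
pose eps := e / 2.
have eps0 : 0 < eps by rewrite divr_gt0.
have [Q Qu [Heig Hoff]] := scaled_schur (C_AB A B) dd0 eps0.
set T := Q *m C_AB A B *m invmx Q in Heig Hoff.
pose F := Q *m (mxconj A *t A) *m invmx Q.
pose Tt := \sum_i \sum_j `|T i j|.
pose Ft := \sum_i \sum_j `|F i j|.
have Tt0 : 0 <= Tt by apply: sumr_ge0 => i _; apply: sumr_ge0.
have Ft0 : 0 <= Ft by apply: sumr_ge0 => i _; apply: sumr_ge0.
pose tt := complex.Re Tt; pose ft := complex.Re Ft.
have TtE : Tt = tt%:C%C by apply: realC_Re.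
have FtE : Ft = ft%:C%C by apply: realC_Re.
have tt0 : 0 <= tt by rewrite -lecR -TtE.
have ft0 : 0 <= ft by rewrite -lecR -FtE.
have [a [a0 a1 c0]] := choose_a lmin eps0 tt0 ft0.
pose G := Gt A B a.
have GQ : Q *m G *m invmx Q = 1%:M + a%:C%C *: T + (a * a)%:C%C *: F.
  rewrite /G /Gt !mulmxDr !mulmxDl mulmx1 mulmxV // -!scalemxAr -!scalemxAl.
  by rewrite ?mulmxA.
have rowE i j : (Q *m G *m invmx Q) i j =
    (i == j)%:R + a%:C%C * T i j + (a * a)%:C%C * F i j.
  by rewrite GQ !mxE.
have ReT i : complex.Re (T i i) <= al.
  by rewrite alE; apply: (ub_le_sup hub); exists (T i i); split; [exact: Heig|].
have Tii i : `|T i i| <= Tt.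
  apply: (@le_trans _ _ (\sum_j `|T i j|)).
    by rewrite (bigD1 i) //= -subr_ge0 addrAC subrr add0r sumr_ge0.
  rewrite /Tt [X in _ <= X](bigD1 i) //= -subr_ge0 addrAC subrr add0r.
  by apply: sumr_ge0 => *; apply: sumr_ge0.
have Fi i : \sum_j `|F i j| <= Ft.
  rewrite /Ft [X in _ <= X](bigD1 i) //= -subr_ge0 addrAC subrr add0r.
  by apply: sumr_ge0 => *; apply: sumr_ge0.
have aC0 : 0 <= a%:C%C :> C by rewrite lecR ltW.
have aaC0 : 0 <= (a * a)%:C%C :> C by rewrite lecR mulr_ge0 // ltW.
pose s := 1 + a * (al + 2 * eps).
have row i : \sum_j `|(Q *m G *m invmx Q) i j| <= s%:C%C.
  under eq_bigr do rewrite rowE.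
  apply: (@le_trans _ _ (\sum_j (`|(i == j)%:R + a%:C%C * T i j| +
            (a * a)%:C%C * `|F i j|))).
    apply: ler_sum => j _; apply: le_trans (ler_normD _ _) _.
    by rewrite normrM (ger0_norm aaC0).
  rewrite big_split /= -mulr_sumr (bigD1 i) //= eqxx.
  under eq_bigr => j ji do rewrite eq_sym (negbTE ji) add0r normrM (ger0_norm aC0).
  rewrite -mulr_sumr.
  have h1 := norm1p (a%:C%C * T i i).
  have ReaT : complex.Re (a%:C%C * T i i) = a * complex.Re (T i i).
    by case: (T i i) => x y /=; ring.
  rewrite ReaT normrM (ger0_norm aC0) exprMn in h1.
  have h2 : `|T i i| ^+ 2 <= tt%:C%C ^+ 2.
    by rewrite -TtE; apply: lerXn2r; rewrite ?nnegrE // ?normr_ge0.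
  have -> : (true%:R : C) = 1 by [].
  have h3 : a%:C%C * \sum_(j | j != i) `|T i j| <= a%:C%C * eps%:C%C.
    by apply: ler_wpM2l => //; apply: Hoff.
  have h4 : (a * a)%:C%C * \sum_j `|F i j| <= (a * a)%:C%C * ft%:C%C.
    by apply: ler_wpM2l => //; rewrite -FtE; apply: Fi.
  have h5 : (1 + a * complex.Re (T i i))%:C%C <= (1 + a * al)%:C%C :> C.
    by rewrite lecR lerD2l ler_wpM2l // ltW.
  have h6 : a%:C%C ^+ 2 * `|T i i| ^+ 2 <= (a * a * tt ^+ 2)%:C%C :> C.
    rewrite !rmorphM -!expr2; apply: ler_wpM2l h2.
    by rewrite exprn_ge0.
  apply: le_trans (lerD (lerD (le_trans h1 (lerD h5 h6)) h3) h4) _.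
  rewrite -!rmorphM -!rmorphD lecR /s.
  by apply: row_real.
have s0 : 0 <= s.
  pose i0 : 'I_(d * d) := Ordinal dd0.
  by rewrite -lecR; apply: le_trans (row i0); apply: sumr_ge0.
have := @LB _ d G Q (1 + a * lmin) s d0 c0 s0 Qu.
have Gpos : forall Y : 'M[C]_d, psd Y -> psd (mat (vecr Y *m G)).
  move=> Y HY u; rewrite mat_Gt matK qf_Gt; apply: addr_ge0; first exact: HY.
  by apply: mulr_ge0 => //; apply: psd_psi.
have GI : psd (mat (vecr 1%:M *m G) - (1 + a * lmin)%:C%C *: 1%:M).
  move=> u; rewrite mat_Gt matK qf_sub !mulmx1 !mul1mx.
  have -> : psi B 1%:M = NK B by apply: eq_bigr => k _; rewrite mulmx1.
  rewrite !qfD !qf_scale qf1 qf_adj.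
  have := Hlo u; rewrite ME !qfD => h.
  have n0 := nrm2_ge0 (A *m u).
  have key : 0 <= a%:C%C * (qf A u + qf (mxadj A) u + qf (NK B) u - lmin%:C%C * nrm2 u)
     + (a%:C%C * a%:C%C) * nrm2 (A *m u).
    apply: addr_ge0; apply: mulr_ge0 => //; first by rewrite subr_ge0.
    exact: mulr_ge0.
  apply: le_trans key _; rewrite le_eqVlt; apply/orP; left; apply/eqP.
  rewrite !rmorphM rmorphD rmorph1; ring.
move=> /(_ Gpos GI row) h.
rewrite /s lerD2l ler_pM2l // /eps in h.
by have -> : e = 2 * (e / 2) by field.
Qed.

End P7.

Unset Implicit Arguments.

Theorem theorem1p1 (R : realType) (d m : nat) (hd : (0 < d)%N)
  (A : 'M[R[i]]_d) (B : 'I_m -> 'M[R[i]]_d) :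
  (spec_min (N_AB A B) <= spec_rad (D_AB A B) <= spec_abs (N_AB A B)) /\
  (spec_min (M_AB A B) <= spec_abs (C_AB A B) <= spec_abs (M_AB A B)).
Proof.
split.
- rewrite N_ABE D_ABE.
  have [lmin [lmax [Hlo Hup Hu1 Hu2]]] := herm_spec hd (NK_herm (Kab A B)).
  have [-> ->] := herm_sup (NK_herm _) Hlo Hup Hu1 Hu2.
  exact: rad_bounds hd Hlo Hup.
- have [lmin [lmax [Hlo Hup Hu1 Hu2]]] := herm_spec hd (M_herm A B).
  have [-> ->] := herm_sup (M_herm A B) Hlo Hup Hu1 Hu2.
  exact: abs_bounds hd Hlo Hup.
Qed.
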